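(* Let $R=k[x_1,\dots,x_n]$, $f_1,\dots,f_m\in R$, $I=\langle f_1,\dots,f_m\rangle$, with fixed term orders on $R$ and $R^m$. Let $G$ be a finite set of polynomials in $I$ with $\{f_1^{[\mathbf e_1]},\dots,f_m^{[\mathbf e_m]}\}\subset G$, and let $f^{[\mathbf u]}$ be a polynomial in $I$. Suppose that for every critical pair $(t_g,g^{[\mathbf v]},t_h,h^{[\mathbf w]})$ of elements of $G$ with $\mathrm{lpp}(\mathbf u)\succeq\mathrm{lpp}(t_g\mathbf v)$, the S-polynomial of this critical pair has a standard representation w.r.t. $G$. Then $f^{[\mathbf u]}$ has a standard representation w.r.t. $G$.
   Context: Let $\mathbf f=(f_1,\dots,f_m)$; a polynomial in $I$ is a pair $f^{[\mathbf u]}$ with $\mathbf u\in R^m$ and $f=\mathbf u\cdot\mathbf f$, with operations $f^{[\mathbf u]}+g^{[\mathbf v]}=(f+g)^{[\mathbf u+\mathbf v]}$, $ct(f^{[\mathbf u]})=(ctf)^{[ct\mathbf u]}$. $\mathbf e_i$ is the $i$-th unit vector. $\mathrm{lpp},\mathrm{lc}$ are leading power product and coefficient (both orders denoted $\prec$), with $\mathrm{lpp}(0)=0\prec$ all nonzero power products. Critical pair: for $g^{[\mathbf v]},h^{[\mathbf w]}$ with $g,h\ne0$, $t=\mathrm{lcm}(\mathrm{lpp}(g),\mathrm{lpp}(h))$, $t_g=t/\mathrm{lpp}(g)$, $t_h=t/\mathrm{lpp}(h)$; if $\mathrm{lpp}(t_g\mathbf v)\succeq\mathrm{lpp}(t_h\mathbf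 w)$ then $(t_g,g^{[\mathbf v]},t_h,h^{[\mathbf w]})$ is a critical pair, with S-polynomial $t_g(g^{[\mathbf v]})-c\,t_h(h^{[\mathbf w]})$, $c=\mathrm{lc}(g)/\mathrm{lc}(h)$. A polynomial $f^{[\mathbf u]}$ in $I$ has a standard representation w.r.t. a set $B$ if there are $p_1,\dots,p_s\in R$ and $g_1^{[\mathbf v_1]},\dots,g_s^{[\mathbf v_s]}\in B$ with $f=\sum_i p_ig_i$, $\mathrm{lpp}(f)\succeq\mathrm{lpp}(p_ig_i)$ and $\mathrm{lpp}(\mathbf u)\succeq\mathrm{lpp}(p_i\mathbf v_i)$ for all $i$. *)

(* Defs.v *)
From HB Require Import structures.
From mathcomp Require Import all_boot all_order all_algebra.
From mathcomp Require Import mpoly.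
Set Implicit Arguments. Unset Strict Implicit. Unset Printing Implicit Defensive.
Import GRing.Theory.
Local Open Scope ring_scope.

Section Signature.
Variables (k : fieldType) (n m : nat).

Local Notation R := {mpoly k[n]}.
Local Notation PP := 'X_{1..n}.
(* power products (module terms) of R^m : x^a e_i *)
Local Notation MPP := ('X_{1..n} * 'I_m)%type.
Local Notation Vec := 'rV[R]_m.

Definition term_order (le : rel PP) : Prop :=
  [/\ reflexive le, antisymmetric le, transitive le, total le
    & (forall a b c, le a b -> le (mnm_add a c) (mnm_add b c))
      /\ (forall a, le mnm0 a)].

Definition mmul (t : PP) (T : MPP) : MPP := (mnm_add t T.1, T.2).

Definition module_term_order (le : rel MPP) : Prop :=
  [/\ reflexive le, antisymmetric le, transitive le, total le
    & (forall t A B, le A B -> le (mmul t A) (mmul t B))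
      /\ (forall t A, le A (mmul t A))].

(* extended order on option T: None plays the role of lpp(0) = 0, which is
   smaller than every power product *)
Definition ext_le (T : Type) (le : rel T) (a b : option T) : bool :=
  match a, b with
  | None, _ => true
  | Some _, None => false
  | Some x, Some y => le x y
  end.

Definition lmax (T : Type) (le : rel T) (s : seq T) : option T :=
  foldr (fun x acc => if ext_le le (Some x) acc then acc else Some x) None s.

Definition lpp (le : rel PP) (f : R) : option PP := lmax le (msupp f).

Definition lc (le : rel PP) (f : R) : k :=
  match lpp le f with Some a => f@_a | None => 0 end.

Definition vsupp (u : Vec) : seq MPP :=
  [seq (a, i) | i <- enum 'I_m, a <- msupp (u 0 i)].

Definition lppv (le : rel MPP) (u : Vec) : option MPP := lmax le (vsupp u).

Definition dotv (u fs : Vec) : R := \sum_(i < m) u 0 i * fs 0 i.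

(* a "polynomial in I": pair f^[u] with f = u . fs *)
Definition in_I (fs : Vec) (p : R * Vec) : Prop := p.1 = dotv p.2 fs.

Definition evec (i : 'I_m) : Vec := delta_mx 0 i.

Definition mlcm (a b : PP) : PP := [multinom maxn (a i) (b i) | i < n].

Definition std_rep (leR : rel PP) (leM : rel MPP) (B : seq (R * Vec))
    (p : R * Vec) : Prop :=
  exists s : seq (R * (R * Vec)),
    [/\ all (fun q => q.2 \in B) s,
        p.1 = \sum_(q <- s) q.1 * q.2.1,
        all (fun q => ext_le leR (lpp leR (q.1 * q.2.1)) (lpp leR p.1)) s
      & all (fun q => ext_le leM (lppv leM (q.1 *: q.2.2)) (lppv leM p.2)) s].

Definition tg_of (a b : PP) : PP := mnm_sub (mlcm a b) a.
Definition th_of (a b : PP) : PP := mnm_sub (mlcm a b) b.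

Definition critical_pair (leR : rel PP) (leM : rel MPP)
    (tg : PP) (gv : R * Vec) (th : PP) (hw : R * Vec) : Prop :=
  exists a b, [/\ lpp leR gv.1 = Some a, lpp leR hw.1 = Some b,
    tg = tg_of a b, th = th_of a b &
    ext_le leM (lppv leM ('X_[th] *: hw.2)) (lppv leM ('X_[tg] *: gv.2))].

Definition spoly (leR : rel PP)
    (tg : PP) (gv : R * Vec) (th : PP) (hw : R * Vec) : R * Vec :=
  let c := lc leR gv.1 / lc leR hw.1 in
  ('X_[tg] * gv.1 - c *: ('X_[th] * hw.1),
   'X_[tg] *: gv.2 - (c *: 'X_[th]) *: hw.2).

End Signature.

(* Main.v *)
Require Import Defs.
From HB Require Import structures.
From mathcomp Require Import all_boot all_order all_algebra.
From mathcomp Require Import mpoly.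
From mathcomp Require Import ring.
From Stdlib Require Import Classical ClassicalEpsilon.
Set Implicit Arguments. Unset Strict Implicit. Unset Printing Implicit Defensive.
Import GRing.Theory.

Section LMax.
Local Open Scope ring_scope.
Variables (T : eqType) (le : rel T).
Hypotheses (lerf : reflexive le) (leas : antisymmetric le) (letr : transitive le) (letot : total le).

Lemma ext_le_trans : transitive (ext_le le).
Proof. move=> [b|] [a|] [c|] //=; apply: letr. Qed.

Lemma ext_le_anti a b : ext_le le a b -> ext_le le b a -> a = b.
Proof. case: a b => [a|] [b|] //= h1 h2; by rewrite (@leas a b) ?h1 ?h2. Qed.

Lemma ext_le_refl : reflexive (ext_le le).
Proof. by case=> //= a; apply: lerf. Qed.

Lemma ext_le_total a b : ext_le le a b || ext_le le b a.
Proof. by case: a b => [a|] [b|] //=; apply: letot. Qed.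

Lemma lmaxP s : match lmax le s with
  | None => s = [::]
  | Some x => x \in s /\ {in s, forall y, le y x} end.
Proof.
elim: s => [|a s IH] //=.
case E: (lmax le s) IH => [x|] /= IH.
  case: IH => xs H.
  case: ifP => hax.
    split; first by rewrite in_cons xs orbT.
    by move=> y; rewrite in_cons => /orP [/eqP->|/H].
  have hxa : le x a by case/orP: (letot a x) => h; rewrite ?h in hax.
  split; first by rewrite mem_head.
  move=> y; rewrite in_cons => /orP [/eqP->|/H hy]; first exact: lerf.
  exact: letr hy hxa.
by subst s; split; [rewrite mem_head | move=> y; rewrite mem_seq1 => /eqP->].
Qed.

Lemma lmax_leP s B : ext_le le (lmax le s) B = all (fun y => ext_le le (Some y) B) s.
Proof.
have := lmaxP s; case: (lmax le s) => [x [xs H]|->] //.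
apply/idP/allP => [h y ys|h]; last exact: h.
by apply: ext_le_trans h; apply: H.
Qed.

Lemma lmax_ub s y : y \in s -> ext_le le (Some y) (lmax le s).
Proof.
have := lmaxP s; case: (lmax le s) => [x [xs H]|->] //; exact: H.
Qed.

Lemma lmax_eq s x : x \in s -> {in s, forall y, le y x} -> lmax le s = Some x.
Proof.
move=> xs H; have := lmaxP s; case: (lmax le s) => [z [zs H']|E'].
  by congr Some; apply: leas; rewrite H // H'.
by rewrite E' in xs.
Qed.

Lemma lmax_mem s s' : s =i s' -> lmax le s = lmax le s'.
Proof.
move=> e; apply: ext_le_anti; rewrite lmax_leP; apply/allP => y ys; apply: lmax_ub;
  by rewrite ?e // -e.
Qed.

End LMax.

Section Orders.
Local Open Scope ring_scope.
Variables (n m : nat) (leR : rel 'X_{1..n}) (leM : rel ('X_{1..n} * 'I_m)).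
Hypotheses (HR : term_order leR) (HM : module_term_order leM).

Lemma leR_refl : reflexive leR. Proof. by case: HR. Qed.
Lemma leR_anti : antisymmetric leR. Proof. by case: HR. Qed.
Lemma leR_trans : transitive leR. Proof. by case: HR. Qed.
Lemma leR_anti2 a b : leR a b -> leR b a -> a = b.
Proof. by move=> h1 h2; apply: leR_anti; rewrite h1 h2. Qed.
Lemma leR_total : total leR. Proof. by case: HR. Qed.
Lemma leR_addr a b c : leR a b -> leR (a + c)%MM (b + c)%MM.
Proof. by case: HR => _ _ _ _ [h _]; apply: h. Qed.
Lemma leR_addl a b c : leR a b -> leR (c + a)%MM (c + b)%MM.
Proof. by rewrite ![(c + _)%MM]addmC; apply: leR_addr. Qed.
Lemma leR0 a : leR 0%MM a.
Proof. by case: HR => _ _ _ _ [_ h]; apply: h. Qed.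
Lemma leR_add a b c d : leR a b -> leR c d -> leR (a + c)%MM (b + d)%MM.
Proof. move=> h1 h2; apply: leR_trans (leR_addr c h1) (leR_addl b h2). Qed.
Lemma leR_addmr a c : leR a (a + c)%MM.
Proof. by rewrite -{1}[a]add0m addmC; apply: leR_addl; apply: leR0. Qed.
Lemma leR_div a b : (a <= b)%MM -> leR a b.
Proof. by move=> h; rewrite -(submK h) addmC; apply: leR_addmr. Qed.

Definition ltR a b := (a != b) && leR a b.

Lemma ltR_add a b c d : ltR a b -> leR c d -> ltR (a + c)%MM (b + d)%MM.
Proof.
case/andP=> nab lab lcd; rewrite /ltR leR_add // andbT.
apply/eqP => e; move/eqP: nab; apply.
have h1 : leR (b + c)%MM (a + c)%MM.
  by rewrite e; apply: leR_addl.
have := leR_anti2 (leR_addr c lab) h1.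
by move/(congr1 (fun x => (x - c)%MM)); rewrite !addmK.
Qed.

Lemma ltR_le a b : ltR a b -> leR a b. Proof. by case/andP. Qed.
Lemma ltR_neq a b : ltR a b -> a != b. Proof. by case/andP. Qed.
Lemma ltR_le_trans a b c : ltR a b -> leR b c -> ltR a c.
Proof.
case/andP=> nab lab lbc; rewrite /ltR (leR_trans lab lbc) andbT.
apply/eqP=> e; subst c; move/eqP: nab; apply; exact: leR_anti (introT andP (conj lab lbc)).
Qed.
Lemma le_ltR_trans a b c : leR a b -> ltR b c -> ltR a c.
Proof.
move=> lab /andP [nbc lbc]; rewrite /ltR (leR_trans lab lbc) andbT.
apply/eqP=> e; subst c; move/eqP: nbc; apply; exact: leR_anti (introT andP (conj lbc lab)).
Qed.
Lemma ltR_nle a b : ltR a b -> ~~ leR b a.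
Proof.
case/andP=> nab lab; apply/negP=> lba; move/eqP: nab; apply.
exact: leR_anti (introT andP (conj lab lba)).
Qed.
Lemma nle_ltR a b : ~~ leR a b -> ltR b a.
Proof.
move=> h; rewrite /ltR; case/orP: (leR_total a b) => h'; first by rewrite h' in h.
rewrite h' andbT; apply/eqP=> e; subst; by rewrite leR_refl in h.
Qed.

Lemma leM_refl : reflexive leM. Proof. by case: HM. Qed.
Lemma leM_anti : antisymmetric leM. Proof. by case: HM. Qed.
Lemma leM_trans : transitive leM. Proof. by case: HM. Qed.
Lemma leM_total : total leM. Proof. by case: HM. Qed.
Lemma leM_mul t A B : leM A B -> leM (mmul t A) (mmul t B).
Proof. by case: HM => _ _ _ _ [h _]; apply: h. Qed.
Lemma leM_mmul t A : leM A (mmul t A).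
Proof. by case: HM => _ _ _ _ [_ h]; apply: h. Qed.
Lemma mmul_inj (t : 'X_{1..n}) : injective (@mmul n m t).
Proof.
case=> a i [b j] e; have /= e1 := congr1 fst e; have /= e2 := congr1 snd e.
subst j; congr pair.
by move: (congr1 (fun x => (x - t)%MM) e1); rewrite ![(t + _)%MM]addmC !addmK.
Qed.
Lemma mmulD (s t : 'X_{1..n}) (A : 'X_{1..n} * 'I_m) : mmul s (mmul t A) = mmul (s + t)%MM A.
Proof. by rewrite /mmul /= addmA. Qed.
Lemma leM_mulE (t : 'X_{1..n}) (A B : 'X_{1..n} * 'I_m) : leM (mmul t A) (mmul t B) = leM A B.
Proof.
apply/idP/idP; last exact: leM_mul.
move=> h; case/orP: (leM_total A B) => // h'.
have := leM_anti (introT andP (conj h (leM_mul t h'))).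
by move/mmul_inj => ->; apply: leM_refl.
Qed.

Lemma ext_leM_mul (t : 'X_{1..n}) (A B : option ('X_{1..n} * 'I_m)) : ext_le leM A B ->
  ext_le leM (omap (mmul t) A) (omap (mmul t) B).
Proof. by case: A B => [A|] [B|] //=; apply: leM_mul. Qed.
End Orders.

Lemma nat_min (g : nat -> nat) N : exists j, N <= j /\ forall j', N <= j' -> g j <= g j'.
Proof.
suff H : forall b j, N <= j -> g j <= b -> exists j, N <= j /\ forall j', N <= j' -> g j <= g j'.
  by apply: (H (g N) N).
elim=> [|b IH]; move=> j hj hb.
  by exists j; split=> // j' _; move: hb; rewrite leqn0 => /eqP ->.
case: (classic (forall j', N <= j' -> g j <= g j')) => h; first by exists j.
case: (not_all_ex_not _ _ h) => j' h'; case: (imply_to_and _ _ h') => hj' /negP.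
rewrite -ltnNge => lt.
apply: (IH j') => //; rewrite -ltnS; exact: leq_trans lt hb.
Qed.

Lemma nat_subseq (g : nat -> nat) : exists psi : nat -> nat,
  (forall i, psi i < psi i.+1) /\ (forall i, g (psi i) <= g (psi i.+1)).
Proof.
have H N := constructive_indefinite_description _ (nat_min g N).
pose mn N := proj1_sig (H N).
have mn1 N : N <= mn N by rewrite /mn; case: (H N) => j [].
have mn2 N j' : N <= j' -> g (mn N) <= g j'.
  by move=> hj; rewrite /mn; case: (H N) => j [_ h] /=; exact: h.
pose psi := fix psi i := if i is i'.+1 then mn (psi i').+1 else mn 0.
have incr i : psi i < psi i.+1 by apply: mn1.
exists psi; split => // i.
case: i => [|i] /=; first by apply: mn2.
apply: mn2; apply: leq_trans (incr i.+1); exact: ltnW (incr i).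
Qed.

Section Dickson.
Variable n : nat.

Lemma dickson (f : nat -> 'X_{1..n}) : exists i j, i < j /\ (f i <= f j)%MM.
Proof.
suff H : forall k, k <= n -> exists phi : nat -> nat, (forall i, phi i < phi i.+1) /\
   forall i (c : 'I_n), c < k -> f (phi i) c <= f (phi i.+1) c.
  case: (H n (leqnn n)) => phi [h1 h2]; exists (phi 0), (phi 1); split => //.
  by apply/mnm_lepP => c; apply: h2.
elim=> [|k IH] hk.
  by exists id; split.
case: (IH (ltnW hk)) => phi [h1 h2].
pose c0 : 'I_n := Ordinal hk.
case: (nat_subseq (fun i => f (phi i) c0)) => psi [p1 p2].
have phimono : {homo phi : i j / i < j >-> i < j}.
  by apply: homo_ltn => // y x z; apply: ltn_trans.
exists (fun i => phi (psi i)); split.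
  by move=> i; apply: phimono.
move=> i c; rewrite ltnS leq_eqVlt => /orP [/eqP hc|hc].
  have -> : c = c0 by apply: val_inj.
  exact: p2.
have mono : {homo (fun j => f (phi j) c) : i j / i <= j >-> i <= j}.
  by apply: homo_leq => // [y x z|j]; [apply: leq_trans|apply: h2].
by apply: mono; apply: ltnW.
Qed.
End Dickson.

Section WF.
Variables (n : nat) (leR : rel 'X_{1..n}).
Hypothesis HR : term_order leR.

Lemma ltR_trans' a b c : ltR leR a b -> ltR leR b c -> ltR leR a c.
Proof. move=> h1 h2; exact: (ltR_le_trans HR h1 (ltR_le h2)). Qed.

Lemma wf_ltR : well_founded (fun a b => ltR leR a b).
Proof.
apply: NNPP => nwf.
have [x0 nx0] : exists x, ~ Acc (fun a b => ltR leR a b) x.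
  apply: NNPP => h; apply: nwf => x; apply: NNPP => hx; apply: h; by exists x.
have step (x : {x | ~ Acc (fun a b => ltR leR a b) x}) :
    exists y : {x | ~ Acc (fun a b => ltR leR a b) x}, ltR leR (proj1_sig y) (proj1_sig x).
  case: x => x hx /=; apply: NNPP => h; apply: hx; constructor => y hy.
  apply: NNPP => hy'; apply: h; by exists (exist _ y hy').
have F x := constructive_indefinite_description _ (step x).
pose seq := fix seq i := if i is i'.+1 then proj1_sig (F (seq i')) else exist _ x0 nx0.
pose g i := proj1_sig (seq i).
have dec i : ltR leR (g i.+1) (g i) by rewrite /g /=; case: (F (seq i)).
have decr : {homo g : i j / i < j >-> ltR leR j i}.
  by apply: homo_ltn => [y x z h1 h2|i]; [apply: ltR_trans' h2 h1|apply: dec].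
case: (dickson g) => i [j [hij hd]].
have := ltR_nle HR (decr i j hij); by rewrite (leR_div HR hd).
Qed.
End WF.

Section Poly.
Local Open Scope ring_scope.
Variables (k : fieldType) (n : nat) (leR : rel 'X_{1..n}).
Hypothesis HR : term_order leR.
Local Notation R := {mpoly k[n]}.

Lemma coefM_uniq (p q : R) A B :
  A \in msupp p -> B \in msupp q ->
  (forall a b, a \in msupp p -> b \in msupp q -> (a + b = A + B)%MM -> a = A /\ b = B) ->
  (p * q)@_(A + B) = p@_A * q@_B.
Proof.
move=> hA hB hu.
rewrite mpolyME raddf_sum /= big_allpairs.
rewrite (bigD1_seq A) ?msupp_uniq //= [X in _ + X]big1_seq ?addr0; last first.
  move=> a /andP [naA ha]; apply: big1_seq => b /andP [_ hb].
  rewrite mcoeffZ mcoeffX; case: eqP => e; last by rewrite mulr0.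
  by case: (hu a b ha hb e) => eA; rewrite eA eqxx in naA.
rewrite (bigD1_seq B) ?msupp_uniq //= [X in _ + X]big1_seq ?addr0; last first.
  move=> b /andP [nbB hb]; rewrite mcoeffZ mcoeffX; case: eqP => e; last by rewrite mulr0.
  by case: (hu A b hA hb e) => _ eB; rewrite eB eqxx in nbB.
by rewrite mcoeffZ mcoeffX eqxx mulr1.
Qed.

Lemma msuppM_ex (p q : R) y : y \in msupp (p * q) ->
  exists a b, [/\ a \in msupp p, b \in msupp q & y = (a + b)%MM].
Proof. by move/msuppM_le/allpairsP => [[a b] /= [ha hb ->]]; exists a, b. Qed.

Lemma lpp_leP (f : R) B :
  ext_le leR (lpp leR f) B = all (fun y => ext_le leR (Some y) B) (msupp f).
Proof. exact: (lmax_leP (leR_refl HR) (leR_trans HR) (leR_total HR)). Qed.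

Lemma lpp_le (f : R) B :
  (forall y, y \in msupp f -> ext_le leR (Some y) B) -> ext_le leR (lpp leR f) B.
Proof. by move=> h; rewrite lpp_leP; apply/allP. Qed.

Lemma lpp_ub (f : R) y : y \in msupp f -> ext_le leR (Some y) (lpp leR f).
Proof. exact: (lmax_ub (leR_refl HR) (leR_trans HR) (leR_total HR)). Qed.

Lemma lppP (f : R) : match lpp leR f with
  | None => f = 0
  | Some a => a \in msupp f /\ {in msupp f, forall y, leR y a} end.
Proof.
have := @lmaxP _ leR (leR_refl HR) (leR_trans HR) (leR_total HR) (msupp f).
rewrite /lpp; case: lmax => // /msuppnil0 //.
Qed.

Lemma lpp_eq (f : R) a : a \in msupp f -> {in msupp f, forall y, leR y a} ->
  lpp leR f = Some a.
Proof. exact: (lmax_eq (leR_refl HR) (leR_anti HR) (leR_trans HR) (leR_total HR)). Qed.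

Lemma lpp0 : lpp leR (0 : R) = None.
Proof. by rewrite /lpp msupp0. Qed.

Lemma lpp_None (f : R) : (lpp leR f == None) = (f == 0).
Proof.
have := lppP f; case: lpp => [a [ha _]|->]; last by rewrite !eqxx.
by apply/esym/eqP => e; rewrite e msupp0 in ha.
Qed.

Lemma lpp_mul (p q : R) A B : lpp leR p = Some A -> lpp leR q = Some B ->
  lpp leR (p * q) = Some (A + B)%MM /\ (p * q)@_(A + B) = p@_A * q@_B.
Proof.
move=> hp hq; have := lppP p; have := lppP q; rewrite hp hq => -[hB uB] [hA uA].
have hc : (p * q)@_(A + B) = p@_A * q@_B.
  apply: coefM_uniq => // a b ha hb e.
  have la := uA a ha; have lb := uB b hb.
  case: (eqVneq a A) => eaA.
    by subst a; split => //; move: (congr1 (fun x => (x - A)%MM) e); rewrite ![(A + _)%MM]addmC !addmK.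
  have := ltR_add HR (introT andP (conj eaA la)) lb.
  by rewrite e /ltR eqxx.
split => //; apply: lpp_eq.
  by rewrite mcoeff_msupp hc mulf_neq0 // -mcoeff_msupp.
move=> y /msuppM_ex [a [b [ha hb ->]]]; exact: (leR_add HR (uA a ha) (uB b hb)).
Qed.

Lemma lpp_X c : lpp leR ('X_[c] : R) = Some c.
Proof. by rewrite /lpp msuppX. Qed.

Lemma lpp_mulX c (g : R) : lpp leR ('X_[c] * g) = omap (mnm_add c) (lpp leR g).
Proof.
case E: (lpp leR g) => [b|]; last first.
  by have := lppP g; rewrite E => ->; rewrite mulr0 lpp0.
by case: (lpp_mul (lpp_X c) E).
Qed.

Lemma lpp_scale (c : k) (f : R) : c != 0 -> lpp leR (c *: f) = lpp leR f.
Proof. by move=> hc; rewrite /lpp; apply: (lmax_mem (leR_refl HR) (leR_anti HR) (leR_trans HR) (leR_total HR)) => y; apply: perm_mem; apply: msuppZ. Qed.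

Lemma lpp_scale_le (c : k) (f : R) : ext_le leR (lpp leR (c *: f)) (lpp leR f).
Proof. apply: lpp_le => y /msuppZ_le; apply: lpp_ub. Qed.

End Poly.

Section Vec.
Local Open Scope ring_scope.
Variables (k : fieldType) (n m : nat) (leM : rel ('X_{1..n} * 'I_m)).
Hypothesis HM : module_term_order leM.
Local Notation R := {mpoly k[n]}.
Local Notation Vec := 'rV[R]_m.

Lemma mem_vsupp (u : Vec) b i : ((b, i) \in vsupp u) = (b \in msupp (u 0 i)).
Proof.
apply/allpairsPdep/idP => [[i' [b' [_ hb [-> ->]]]] //|hb].
by exists i, b; split => //; rewrite mem_enum.
Qed.

Lemma lppv_le (u : Vec) B :
  (forall i b, b \in msupp (u 0 i) -> ext_le leM (Some (b, i)) B) -> ext_le leM (lppv leM u) B.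
Proof.
move=> h; rewrite /lppv (lmax_leP (leM_refl HM) (leM_trans HM) (leM_total HM)).
by apply/allP => -[b i]; rewrite mem_vsupp; apply: h.
Qed.

Lemma lppv_ub (u : Vec) b i : b \in msupp (u 0 i) -> ext_le leM (Some (b, i)) (lppv leM u).
Proof.
rewrite -mem_vsupp; exact: (lmax_ub (leM_refl HM) (leM_trans HM) (leM_total HM)).
Qed.

Lemma lppv_eq (u : Vec) b i : b \in msupp (u 0 i) ->
  (forall i' b', b' \in msupp (u 0 i') -> leM (b', i') (b, i)) -> lppv leM u = Some (b, i).
Proof.
move=> hb h; apply: (lmax_eq (leM_refl HM) (leM_anti HM) (leM_trans HM) (leM_total HM)).
  by rewrite mem_vsupp.
by move=> [b' i']; rewrite mem_vsupp; apply: h.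
Qed.

Lemma lppvP (u : Vec) : match lppv leM u with
  | None => u = 0
  | Some (b, i) => b \in msupp (u 0 i) /\
      forall i' b', b' \in msupp (u 0 i') -> leM (b', i') (b, i) end.
Proof.
have := @lmaxP _ leM (leM_refl HM) (leM_trans HM) (leM_total HM) (vsupp u).
rewrite /lppv; case: lmax => [[b i] [h1 h2]|h].
  by rewrite mem_vsupp in h1; split => // i' b' hb; apply: h2; rewrite mem_vsupp.
apply/rowP => i; rewrite mxE; apply: msuppnil0.
case E: (msupp (u 0 i)) => [|b s] //.
have : (b, i) \in vsupp u by rewrite mem_vsupp E mem_head.
by rewrite h.
Qed.

Lemma lppv0 : lppv leM (0 : Vec) = None.
Proof.
have : ext_le leM (lppv leM (0 : Vec)) None.
  by apply: lppv_le => i b; rewrite mxE msupp0.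
by case: lppv.
Qed.

Lemma msuppXM_ex c (g : R) b : b \in msupp ('X_[c] * g) -> exists2 b', b' \in msupp g & b = (c + b')%MM.
Proof. by rewrite -commr_mpolyX (perm_mem (msuppMX g c)) => /mapP. Qed.

Lemma msuppXM_in c (g : R) b : b \in msupp g -> (c + b)%MM \in msupp ('X_[c] * g).
Proof. by move=> hb; rewrite -commr_mpolyX (perm_mem (msuppMX g c)); apply: map_f. Qed.

Lemma lppvX c (w : Vec) : lppv leM ('X_[c] *: w) = omap (mmul c) (lppv leM w).
Proof.
have := lppvP w; case: (lppv leM w) => [[b i] [hb h]|->]; last by rewrite scaler0 lppv0.
rewrite /=; apply: lppv_eq; first by rewrite mxE; apply: msuppXM_in.
move=> i' b'; rewrite mxE => /msuppXM_ex [b'' hb'' ->].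
exact: (leM_mul HM c (h i' b'' hb'')).
Qed.

Lemma lppv_mul_upper (p : R) (v : Vec) B :
  (forall a, a \in msupp p -> ext_le leM (lppv leM ('X_[a] *: v)) B) ->
  ext_le leM (lppv leM (p *: v)) B.
Proof.
move=> h; apply: lppv_le => i y; rewrite mxE => /msuppM_ex [a [b [ha hb ->]]].
apply: (ext_le_trans (leM_trans HM) _ (h a ha)); apply: lppv_ub.
by rewrite mxE; apply: msuppXM_in.
Qed.

Lemma lppv_mul_lower (q : R) (w : Vec) b : b \in msupp q ->
  ext_le leM (lppv leM ('X_[b] *: w)) (lppv leM (q *: w)).
Proof.
move=> hb; rewrite lppvX.
have := lppvP w; case: (lppv leM w) => [[c i] [hc hw]|_] //=.
pose L := (c, i).
have := @lmaxP _ leM (leM_refl HM) (leM_trans HM) (leM_total HM) [seq mmul a L | a <- msupp q].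
case: lmax => [M [/mapP [a0 ha0 eM] hM]|]; last first.
  by case: (msupp q) hb.
have key : (a0 + c)%MM \in msupp ((q *: w) 0 i).
  rewrite mxE mcoeff_msupp (coefM_uniq ha0 hc); first by rewrite mulf_neq0 // -mcoeff_msupp.
  move=> a b' ha hb' e.
  have h1 : leM (mmul a (b', i)) (mmul a L) by apply: (leM_mul HM); exact: hw hb'.
  have h2 : leM (mmul a L) M by apply: hM; apply: map_f.
  have e' : mmul a (b', i) = M by rewrite eM /mmul /= e.
  have e2 : mmul a L = M.
    apply: (leM_anti HM); rewrite h2 /=; by rewrite -{1}e'.
  have ea : a = a0.
    move: (congr1 fst e2); rewrite eM /= => e3.
    by move: (congr1 (fun x => (x - c)%MM) e3); rewrite !addmK.
  subst a; split => //.
  by move: e; rewrite ![(a0 + _)%MM]addmC => /(congr1 (fun x => (x - a0)%MM)); rewrite !addmK.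
have hle : leM (mmul b L) M by apply: hM; apply: map_f.
move: (lppv_ub key); case: (lppv leM (q *: w)) => //= y hy.
by apply: (leM_trans HM hle); rewrite eM.
Qed.

Lemma lppv_sub (x y : Vec) B : ext_le leM (lppv leM x) B -> ext_le leM (lppv leM y) B ->
  ext_le leM (lppv leM (x - y)) B.
Proof.
move=> hx hy; apply: lppv_le => i b; rewrite !mxE => /msuppB_le; rewrite mem_cat => /orP [h|h].
  exact: (ext_le_trans (leM_trans HM) (lppv_ub h) hx).
exact: (ext_le_trans (leM_trans HM) (lppv_ub h) hy).
Qed.

Lemma lppv_scalek (c : k) (p : R) (w : Vec) :
  ext_le leM (lppv leM ((c *: p) *: w)) (lppv leM (p *: w)).
Proof.
apply: lppv_le => i b; rewrite !mxE -scalerAl => /msuppZ_le h.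
by apply: lppv_ub; rewrite mxE.
Qed.

End Vec.

Section Main.
Local Open Scope ring_scope.
Variables (k : fieldType) (n m : nat)
    (leR : rel 'X_{1..n}) (leM : rel ('X_{1..n} * 'I_m))
    (fs : 'rV[{mpoly k[n]}]_m)
    (G : seq ({mpoly k[n]} * 'rV[{mpoly k[n]}]_m))
    (f : {mpoly k[n]}) (u : 'rV[{mpoly k[n]}]_m).
Hypotheses (HR : term_order leR) (HM : module_term_order leM).
Hypothesis hS : forall gv hw tg th, gv \in G -> hw \in G ->
     critical_pair leR leM tg gv th hw ->
     ext_le leM (lppv leM ('X_[tg] *: gv.2)) (lppv leM u) ->
     std_rep leR leM G (spoly leR tg gv th hw).
Local Notation R := {mpoly k[n]}.
Local Notation Vec := 'rV[R]_m.
Local Notation Q := (R * (R * Vec))%type.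

Definition sigok (q : Q) := forall a, a \in msupp q.1 ->
  ext_le leM (lppv leM ('X_[a] *: q.2.2)) (lppv leM u).

Lemma omap_mmulD (s t : 'X_{1..n}) (x : option ('X_{1..n} * 'I_m)) :
  omap (mmul s) (omap (mmul t) x) = omap (mmul (s + t)%MM) x.
Proof. by case: x => //= A; rewrite mmulD. Qed.

Lemma lc_eq (g : R) b : lpp leR g = Some b -> lc leR g = g@_b.
Proof. by rewrite /lc => ->. Qed.

Lemma coefXM (g : R) b c : lpp leR g = Some b -> ('X_[c] * g)@_(c + b) = g@_b.
Proof.
move=> hb; have [_ ->] := lpp_mul HR (lpp_X k leR c) hb.
by rewrite mcoeffX eqxx mul1r.
Qed.

Lemma lcm_add (bg bh : 'X_{1..n}) : (tg_of bg bh + bg)%MM = Defs.mlcm bg bh.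
Proof. by rewrite /tg_of submK //; exact: (lem_mlcml bg bh). Qed.
Lemma lcm_addr (bg bh : 'X_{1..n}) : (th_of bg bh + bh)%MM = Defs.mlcm bg bh.
Proof. by rewrite /th_of submK //; exact: (lem_mlcmr bg bh). Qed.

Lemma S_lt (g h : R * Vec) bg bh :
  lpp leR g.1 = Some bg -> lpp leR h.1 = Some bh ->
  forall y, y \in msupp (spoly leR (tg_of bg bh) g (th_of bg bh) h).1 ->
    ltR leR y (Defs.mlcm bg bh).
Proof.
move=> hg hh y; rewrite /spoly /=.
set tg := tg_of bg bh; set th := th_of bg bh; set L := Defs.mlcm bg bh.
set c := lc leR g.1 / lc leR h.1.
have lg : lpp leR ('X_[tg] * g.1) = Some L by rewrite lpp_mulX // hg /= lcm_add.
have lh : lpp leR ('X_[th] * h.1) = Some L by rewrite lpp_mulX // hh /= lcm_addr.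
move=> hy; rewrite /ltR.
have hle : leR y L.
  move/msuppB_le: hy; rewrite mem_cat => /orP [hy|/msuppZ_le hy].
    by have := lpp_ub HR hy; rewrite lg.
  by have := lpp_ub HR hy; rewrite lh.
rewrite hle andbT; apply/eqP => eyL.
move: hy; rewrite eyL mcoeff_msupp mcoeffB mcoeffZ.
rewrite -[L]lcm_add coefXM // lcm_add -[X in _ * _@_X]lcm_addr coefXM //.
rewrite /c (lc_eq hg) (lc_eq hh).
have : h.1@_bh != 0 by have := lppP HR h.1; rewrite hh -mcoeff_msupp => -[].
by move=> nz; rewrite mulfVK // subrr eqxx.
Qed.

Lemma S_expand (g h : R * Vec) bg bh mm t (e : k) :
  g \in G -> h \in G -> lpp leR g.1 = Some bg -> lpp leR h.1 = Some bh ->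
  (mm + Defs.mlcm bg bh)%MM = t ->
  ext_le leM (lppv leM ('X_[th_of bg bh] *: h.2)) (lppv leM ('X_[tg_of bg bh] *: g.2)) ->
  ext_le leM (lppv leM ('X_[mm + tg_of bg bh] *: g.2)) (lppv leM u) ->
  exists sE : seq Q, [/\ all (fun q => q.2 \in G) sE,
    \sum_(q <- sE) q.1 * q.2.1 =
       e *: ('X_[mm] * (spoly leR (tg_of bg bh) g (th_of bg bh) h).1),
    (forall q, q \in sE -> forall y, y \in msupp (q.1 * q.2.1) -> ltR leR y t)
  & (forall q, q \in sE -> sigok q)].
Proof.
move=> gG hG hg hh emm crit sig.
set tg := tg_of bg bh in crit sig *; set th := th_of bg bh in crit.
have sigtg : ext_le leM (lppv leM ('X_[tg] *: g.2)) (lppv leM u).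
  apply: (ext_le_trans (leM_trans HM)) sig; rewrite !lppvX //.
  case: (lppv leM g.2) => //= A; rewrite -mmulD; exact: leM_mmul.
have cp : critical_pair leR leM tg g th h.
  by exists bg, bh; split.
have [sS [sG ssum slpp ssig]] := hS gG hG cp sigtg.
set S := spoly leR tg g th h in sS sG ssum slpp ssig *.
exists [seq (e *: ('X_[mm] * q.1), q.2) | q <- sS]; split.
- by rewrite all_map; apply: sub_all sG => q.
- rewrite big_map ssum /= mulr_sumr scaler_sumr; apply: eq_bigr => q _.
  by rewrite -scalerAl mulrA.
- move=> q /mapP [q0 hq0 ->] y /=; rewrite -scalerAl => /msuppZ_le.
  rewrite -mulrA => /msuppXM_ex [y' hy' ->].
  rewrite -emm ![(mm + _)%MM]addmC; apply: (ltR_add HR _ (leR_refl HR mm)).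
  have h1 := (allP slpp) q0 hq0; have h2 := lpp_ub HR hy'.
  have := ext_le_trans (leR_trans HR) h2 h1.
  have := lppP HR S.1; case: (lpp leR S.1) => [z [hz _]|_] //= hyz.
  exact: (le_ltR_trans HR hyz (S_lt hg hh hz)).
- move=> q /mapP [q0 hq0 ->] a /= /msuppZ_le /msuppXM_ex [a' ha' ->].
  have h1 := @lppv_mul_lower _ _ _ _ HM q0.1 q0.2.2 a' ha'.
  have h2 := (allP ssig) q0 hq0.
  have h3 : ext_le leM (lppv leM S.2) (lppv leM ('X_[tg] *: g.2)).
    apply: (lppv_sub HM (ext_le_refl (leM_refl HM) _)).
    exact: (ext_le_trans (leM_trans HM) (lppv_scalek HM _ _ _) crit).
  have H := ext_le_trans (leM_trans HM) h1 (ext_le_trans (leM_trans HM) h2 h3).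
  have H' := ext_leM_mul HM mm H.
  rewrite !lppvX // in H' sig *.
  apply: (ext_le_trans (leM_trans HM) _ sig).
  by move: H'; rewrite !omap_mmulD.
Qed.
End Main.

Section Aux.
Local Open Scope ring_scope.
Variables (k : fieldType) (n : nat).
Local Notation R := {mpoly k[n]}.

Lemma supp_sub_lead (p : R) a b : a \in msupp p ->
  b \in msupp (p - p@_a *: 'X_[a]) -> (b \in msupp p) && (b != a).
Proof.
move=> ha hb; have hb' := hb.
move/msuppB_le: hb; rewrite mem_cat => /orP [hb|/msuppZ_le]; last first.
  rewrite msuppX mem_seq1 => /eqP eb; subst b.
  by move: hb'; rewrite mcoeff_msupp mcoeffB mcoeffZ mcoeffX eqxx mulr1 subrr eqxx.
rewrite hb /=; apply/eqP => eb; subst b.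
by move: hb'; rewrite mcoeff_msupp mcoeffB mcoeffZ mcoeffX eqxx mulr1 subrr eqxx.
Qed.

Lemma supp_add_mono (p : R) a (d : k) b : a \in msupp p ->
  b \in msupp (p + d *: 'X_[a]) -> b \in msupp p.
Proof.
move=> ha /msuppD_le; rewrite mem_cat => /orP [//|/msuppZ_le].
by rewrite msuppX mem_seq1 => /eqP ->.
Qed.

Lemma mlcmC' (a b : 'X_{1..n}) : Defs.mlcm a b = Defs.mlcm b a.
Proof. by apply/mnmP => i; rewrite !mnmE maxnC. Qed.
End Aux.

Section Main.
Local Open Scope ring_scope.
Variables (k : fieldType) (n m : nat)
    (leR : rel 'X_{1..n}) (leM : rel ('X_{1..n} * 'I_m))
    (fs : 'rV[{mpoly k[n]}]_m)
    (G : seq ({mpoly k[n]} * 'rV[{mpoly k[n]}]_m))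
    (f : {mpoly k[n]}) (u : 'rV[{mpoly k[n]}]_m).
Hypotheses (HR : term_order leR) (HM : module_term_order leM).
Hypothesis hS : forall gv hw tg th, gv \in G -> hw \in G ->
     critical_pair leR leM tg gv th hw ->
     ext_le leM (lppv leM ('X_[tg] *: gv.2)) (lppv leM u) ->
     std_rep leR leM G (spoly leR tg gv th hw).
Local Notation R := {mpoly k[n]}.
Local Notation Vec := 'rV[R]_m.
Local Notation Q := (R * (R * Vec))%type.
Local Notation sigok := (sigok leM u).

Lemma cancel_add (a b c : 'X_{1..n}) : (a + c = b + c)%MM -> a = b.
Proof. by move/(congr1 (fun x => (x - c)%MM)); rewrite !addmK. Qed.

Lemma pair_step (p1 p2 : R) (g1 g2 : R * Vec) a1 b1 a2 b2 t :
  g1 \in G -> g2 \in G ->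
  lpp leR p1 = Some a1 -> lpp leR g1.1 = Some b1 ->
  lpp leR p2 = Some a2 -> lpp leR g2.1 = Some b2 ->
  t = (a1 + b1)%MM -> t = (a2 + b2)%MM ->
  sigok (p1, g1) -> sigok (p2, g2) ->
  exists d (sE : seq Q), [/\ all (fun q => q.2 \in G) sE,
    (forall q, q \in sE -> forall z, z \in msupp (q.1 * q.2.1) -> ltR leR z t),
    (forall q, q \in sE -> sigok q)
  & p1@_a1 *: ('X_[a1] * g1.1) = d *: ('X_[a2] * g2.1) + \sum_(q <- sE) q.1 * q.2.1].
Proof.
move=> g1G g2G ha1 hb1 ha2 hb2 etx ety sx sy.
have axs : a1 \in msupp p1 by have := lppP HR p1; rewrite ha1 => -[].
have ays : a2 \in msupp p2 by have := lppP HR p2; rewrite ha2 => -[].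
have nzx : g1.1@_b1 != 0 by have := lppP HR g1.1; rewrite hb1 -mcoeff_msupp => -[].
have nzy : g2.1@_b2 != 0 by have := lppP HR g2.1; rewrite hb2 -mcoeff_msupp => -[].
set L := Defs.mlcm b1 b2.
have hLt : (L <= t)%MM.
  by rewrite /L lem_mlcm {1}etx lem_addl ety lem_addl.
set mm := mnm_sub t L.
have emm : (mm + L)%MM = t by rewrite /mm submK.
have ea1 : a1 = (mm + tg_of b1 b2)%MM.
  by apply: (@cancel_add _ _ b1); rewrite -addmA lcm_add emm etx.
have ea2 : a2 = (mm + th_of b1 b2)%MM.
  by apply: (@cancel_add _ _ b2); rewrite -addmA lcm_addr emm ety.
have sig1 : ext_le leM (lppv leM ('X_[mm + tg_of b1 b2] *: g1.2)) (lppv leM u).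
  by rewrite -ea1; exact: sx a1 axs.
have sig2 : ext_le leM (lppv leM ('X_[mm + th_of b1 b2] *: g2.2)) (lppv leM u).
  by rewrite -ea2; exact: sy a2 ays.
have lc1 : lc leR g1.1 = g1.1@_b1 by rewrite /lc hb1.
have lc2 : lc leR g2.1 = g2.1@_b2 by rewrite /lc hb2.
case: (boolP (ext_le leM (lppv leM ('X_[th_of b1 b2] *: g2.2))
    (lppv leM ('X_[tg_of b1 b2] *: g1.2)))) => hc.
  have [sE [sG ssum slt ssig]] := S_expand HR HM hS (p1@_a1) g1G g2G hb1 hb2 emm hc sig1.
  exists (p1@_a1 * (lc leR g1.1 / lc leR g2.1)), sE; split => //.
  rewrite ssum /spoly /= ea1 ea2 !mpolyXD.
  set c := lc leR g1.1 / lc leR g2.1.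
  rewrite mulrBr scalerBr -scalerAr scalerA !mulrA.
  by rewrite addrC subrK.
have hc' : ext_le leM (lppv leM ('X_[tg_of b1 b2] *: g1.2)) (lppv leM ('X_[th_of b1 b2] *: g2.2)).
  by case/orP: (ext_le_total (leM_total HM) (lppv leM ('X_[th_of b1 b2] *: g2.2))
    (lppv leM ('X_[tg_of b1 b2] *: g1.2))) => h; rewrite ?h in hc.
have et1 : th_of b2 b1 = tg_of b1 b2 by rewrite /th_of /tg_of mlcmC'.
have et2 : tg_of b2 b1 = th_of b1 b2 by rewrite /th_of /tg_of mlcmC'.
have emm' : (mm + Defs.mlcm b2 b1)%MM = t by rewrite mlcmC'.
rewrite -et1 -et2 in hc'; rewrite -et2 in sig2.
set c' := lc leR g2.1 / lc leR g1.1.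
have nzc : c' != 0 by rewrite /c' lc1 lc2 mulf_neq0 // invr_neq0.
have [sE [sG ssum slt ssig]] := S_expand HR HM hS (- (p1@_a1 / c')) g2G g1G hb2 hb1 emm' hc' sig2.
exists (p1@_a1 / c'), sE; split => //.
rewrite ssum /spoly /= -/c' et1 et2 mulrBr -scalerAr !mulrA -!mpolyXD -ea1 -ea2.
rewrite scalerBr scalerA mulNr divfK //.
by rewrite !scaleNr opprK addrA addrN add0r.
Qed.

Definition below t (q : Q) := forall y, y \in msupp (q.1 * q.2.1) -> leR y t.
Definition rep (s : seq Q) t := [/\ all (fun q => q.2 \in G) s,
  f = \sum_(q <- s) q.1 * q.2.1, (forall q, q \in s -> below t q)
  & (forall q, q \in s -> sigok q)].
Definition top t (q : Q) := t \in msupp (q.1 * q.2.1).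

Lemma finish (s : seq Q) : all (fun q => q.2 \in G) s -> f = \sum_(q <- s) q.1 * q.2.1 ->
  (forall q, q \in s -> ext_le leR (lpp leR (q.1 * q.2.1)) (lpp leR f)) ->
  (forall q, q \in s -> sigok q) -> std_rep leR leM G (f, u).
Proof.
move=> h1 h2 h3 h4; exists s; split => //; apply/allP => q hq; first exact: h3.
apply: (lppv_mul_upper HM); exact: h4.
Qed.

Lemma start (s : seq Q) : all (fun q => q.2 \in G) s -> f = \sum_(q <- s) q.1 * q.2.1 ->
  (forall q, q \in s -> sigok q) ->
  (forall t, rep s t -> std_rep leR leM G (f, u)) -> std_rep leR leM G (f, u).
Proof.
move=> sG sf ss IH.
pose ys := flatten [seq msupp (q.1 * q.2.1) | q <- s].
have := @lmaxP _ leR (leR_refl HR) (leR_trans HR) (leR_total HR) ys.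
case: lmax => [t' [ht' H]|e].
  apply: (IH t'); split => // q0 hq0 y hy; apply: H; apply/flatten_mapP; by exists q0.
apply: (finish sG sf _ ss) => q hq.
rewrite /lpp; case E: (msupp (q.1 * q.2.1)) => [|y l] //.
have : y \in ys by apply/flatten_mapP; exists q => //; rewrite E mem_head.
by rewrite e.
Qed.

Lemma zero_case t (s : seq Q) :
  (forall t', ltR leR t' t -> forall s, rep s t' -> std_rep leR leM G (f, u)) ->
  rep s t -> (forall q, q \in s -> ~~ top t q) -> std_rep leR leM G (f, u).
Proof.
move=> IH [sG sf sb ss] nt.
have lt q y : q \in s -> y \in msupp (q.1 * q.2.1) -> ltR leR y t.
  move=> hq hy; rewrite /ltR (sb q hq y hy) andbT; apply/eqP => e; subst y.
  by move: (nt q hq); rewrite /top hy.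
pose ys := flatten [seq msupp (q.1 * q.2.1) | q <- s].
have := @lmaxP _ leR (leR_refl HR) (leR_trans HR) (leR_total HR) ys.
case: lmax => [t' [ht' H]|e].
  case/flatten_mapP: ht' => q hq ht'.
  apply: (IH t' (lt q t' hq ht') s); split => // q0 hq0 y hy; apply: H; apply/flatten_mapP; by exists q0.
apply: (finish sG sf _ ss) => q hq.
rewrite /lpp; case E: (msupp (q.1 * q.2.1)) => [|y l] //.
have : y \in ys by apply/flatten_mapP; exists q => //; rewrite E mem_head.
by rewrite e.
Qed.

Lemma count0 (p : pred Q) (l : seq Q) : (forall q, q \in l -> ~~ p q) -> count p l = 0.
Proof. by move=> h; apply/eqP; rewrite -leqn0 leqNgt -has_count; apply/hasPn. Qed.

Lemma pos_case t (s : seq Q) : rep s t -> ~~ ext_le leR (Some t) (lpp leR f) ->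
  (0 < count (top t) s)%N -> exists s', rep s' t /\ (count (top t) s' < count (top t) s)%N.
Proof.
move=> [sG sf sb ss] hf cpos.
have ft : f@_t = 0.
  apply/eqP; rewrite mcoeff_eq0; apply/negP => ht; move: hf; by rewrite (lpp_ub HR ht).
have [x xs tx] : exists2 x, x \in s & top t x by apply/hasP; rewrite has_count.
have pe1 := perm_to_rem xs.
have [y ys ty] : exists2 y, y \in rem x s & top t y.
  apply/hasP; apply: contraT => /hasPn nt.
  move: ft; rewrite sf raddf_sum (perm_big _ pe1) big_cons big1_seq ?addr0; last first.
    move=> q /andP [_ hq]; apply/eqP; rewrite mcoeff_eq0; exact: nt q hq.
  move=> h; change ((x.1 * x.2.1)@_t + 0 = 0) in h; rewrite addr0 in h.
  have : (x.1 * x.2.1)@_t == 0 by rewrite h.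
  by rewrite mcoeff_eq0 -/(top t x) tx.
have pe2 : perm_eq s [:: x, y & rem y (rem x s)].
  by apply: (perm_trans pe1); rewrite perm_cons; exact: perm_to_rem ys.
set s2 := rem y (rem x s) in pe2.
have s2s q : q \in s2 -> q \in s by move/mem_rem/mem_rem.
have ys' : y \in s := mem_rem ys.
have sx : sigok (x.1, x.2) by rewrite -surjective_pairing; exact: ss x xs.
have sy : sigok (y.1, y.2) by rewrite -surjective_pairing; exact: ss y ys'.
have g1G : x.2 \in G by exact: (allP sG) x xs.
have g2G : y.2 \in G by exact: (allP sG) y ys'.
have lpx : lpp leR (x.1 * x.2.1) = Some t by apply: (lpp_eq HR tx) => z hz; exact: sb x xs z hz.
have lpy : lpp leR (y.1 * y.2.1) = Some t by apply: (lpp_eq HR ty) => z hz; exact: sb y ys' z hz.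
case E1: (lpp leR x.1) => [a1|]; last first.
  by have := lppP HR x.1; rewrite E1 => e; rewrite e mul0r lpp0 in lpx.
case F1: (lpp leR x.2.1) => [b1|]; last first.
  by have := lppP HR x.2.1; rewrite F1 => e; rewrite e mulr0 lpp0 in lpx.
case E2: (lpp leR y.1) => [a2|]; last first.
  by have := lppP HR y.1; rewrite E2 => e; rewrite e mul0r lpp0 in lpy.
case F2: (lpp leR y.2.1) => [b2|]; last first.
  by have := lppP HR y.2.1; rewrite F2 => e; rewrite e mulr0 lpp0 in lpy.
have et1 : t = (a1 + b1)%MM by have [e _] := lpp_mul HR E1 F1; rewrite lpx in e; case: e.
have et2 : t = (a2 + b2)%MM by have [e _] := lpp_mul HR E2 F2; rewrite lpy in e; case: e.
have [d [sE [sEG sElt sEsig hid]]] := pair_step g1G g2G E1 F1 E2 F2 et1 et2 sx sy.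
have a1s : a1 \in msupp x.1 by have := lppP HR x.1; rewrite E1 => -[].
have a2s : a2 \in msupp y.1 by have := lppP HR y.1; rewrite E2 => -[].
have ub1 := lppP HR x.1; rewrite E1 in ub1; case: ub1 => _ ub1.
have ub2 := lppP HR y.1; rewrite E2 in ub2; case: ub2 => _ ub2.
have vb1 := lppP HR x.2.1; rewrite F1 in vb1; case: vb1 => _ vb1.
have vb2 := lppP HR y.2.1; rewrite F2 in vb2; case: vb2 => _ vb2.
pose x' : Q := (x.1 - x.1@_a1 *: 'X_[a1], x.2).
pose y' : Q := (y.1 + d *: 'X_[a2], y.2).
have ltx' z : z \in msupp (x'.1 * x'.2.1) -> ltR leR z t.
  move/msuppM_ex => [a [b [ha hb ->]]].
  case/andP: (supp_sub_lead a1s ha) => ha' naa.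
  rewrite et1; apply: (ltR_add HR); last exact: vb1.
  by rewrite /ltR naa; apply: ub1.
have ley' z : z \in msupp (y'.1 * y'.2.1) -> leR z t.
  move/msuppM_ex => [a [b [ha hb ->]]].
  have ha' := supp_add_mono a2s ha.
  rewrite et2; apply: (leR_add HR); [exact: ub2|exact: vb2].
exists [:: x', y' & s2 ++ sE]; split; first split.
- rewrite /= g1G g2G all_cat sEG andbT /=.
  by apply/allP => q hq; exact: (allP sG) q (s2s q hq).
- rewrite sf (perm_big _ pe2) !big_cons big_cat /= mulrBl mulrDl -!scalerAl hid.
  ring.
- move=> q; rewrite !in_cons mem_cat => /or4P [/eqP->|/eqP->|hq|hq] z hz.
  + exact: ltR_le (ltx' z hz).
  + exact: ley' z hz.
  + exact: sb q (s2s q hq) z hz.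
  + exact: ltR_le (sElt q hq z hz).
- move=> q; rewrite !in_cons mem_cat => /or4P [/eqP->|/eqP->|hq|hq] a ha.
  + by case/andP: (supp_sub_lead a1s ha) => ha' _; exact: sx a ha'.
  + have ha' := supp_add_mono a2s ha.
    exact (sy a ha').
  + exact: ss q (s2s q hq) a ha.
  + exact: sEsig q hq a ha.
have c0 : count (top t) sE = 0.
  by apply: count0 => q hq; apply/negP => /(sElt q hq); rewrite /ltR eqxx.
rewrite (permP pe2) /= count_cat c0.
have -> : top t x' = false.
  by apply/negP => /ltx'; rewrite /ltR eqxx.
rewrite /top -/(top t x) -/(top t y) tx ty.
set c := count _ s2.
by case: (t \in _); rewrite /= !addn0 !add1n ?add0n ?ltnS // leqnSn.
Qed.

Lemma main t : forall s, rep s t -> std_rep leR leM G (f, u).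
Proof.
pose P t := forall s, rep s t -> std_rep leR leM G (f, u).
suff : forall t, P t by apply.
apply: (well_founded_ind (wf_ltR HR) P) => {}t IHt s hrep.
have := leqnn (count (top t) s); move: {2}(count (top t) s) => N.
elim: N s hrep => [|N IHN] s hrep hN.
  apply: (zero_case IHt hrep) => q hq; apply/negP => tq.
  have : has (top t) s by apply/hasP; exists q.
  by rewrite has_count; move: hN; rewrite leqn0 => /eqP ->.
case: (boolP (ext_le leR (Some t) (lpp leR f))) => hf.
  case: hrep => sG sf sb ss; apply: (finish sG sf _ ss) => q hq.
  apply: (ext_le_trans (leR_trans HR) _ hf); apply: (lpp_le HR) => y hy; exact: sb q hq y hy.
case: (posnP (count (top t) s)) => c0.
  apply: (zero_case IHt hrep) => q hq; apply/negP => tq.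
  have : has (top t) s by apply/hasP; exists q.
  by rewrite has_count c0.
have [s' [hrep' hlt]] := pos_case hrep hf c0.
apply: (IHN s' hrep'); rewrite -ltnS; exact: leq_trans hlt hN.
Qed.

End Main.

Unset Implicit Arguments.
Local Open Scope ring_scope.

Theorem lemma5p1 (k : fieldType) (n m : nat)
    (leR : rel 'X_{1..n}) (leM : rel ('X_{1..n} * 'I_m))
    (fs : 'rV[{mpoly k[n]}]_m)
    (G : seq ({mpoly k[n]} * 'rV[{mpoly k[n]}]_m))
    (f : {mpoly k[n]}) (u : 'rV[{mpoly k[n]}]_m) :
  term_order leR ->
  module_term_order leM ->
  (forall p, p \in G -> in_I fs p) ->
  (forall i : 'I_m, (fs 0 i, @evec k n m i) \in G) ->
  in_I fs (f, u) ->
  (forall gv hw tg th, gv \in G -> hw \in G ->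
     critical_pair leR leM tg gv th hw ->
     ext_le leM (lppv leM ('X_[tg] *: gv.2)) (lppv leM u) ->
     std_rep leR leM G (spoly leR tg gv th hw)) ->
  std_rep leR leM G (f, u).
Proof.
move=> HR HM hG hE hf hS.
apply: (@start k n m leR leM G f u HR HM [seq (u 0 i, (fs 0 i, @evec k n m i)) | i <- enum 'I_m]).
- by apply/allP => q /mapP [i _ ->]; exact: hE.
- by rewrite [f]hf /dotv big_map big_enum.
- move=> q /mapP [i _ ->] a ha /=.
  apply: (lppv_le HM) => j b; rewrite !mxE eqxx /=.
  case: eqP => [->|_]; last by rewrite mulr0 msupp0.
  rewrite mulr1 msuppX mem_seq1 => /eqP ->.
  exact: (lppv_ub HM ha).
- move=> t hrep; exact: (main HR HM hS hrep).
Qed.
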